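(* Let $\Gamma$ be a set and $\Lambda:\Gamma\to\mathbb R^{m\times n}$ with sparsity pattern $S$. Let $L\in\mathbb R^{m\times m}$ be invertible and let $\hat S$ be the sparsity pattern of $\hat\Lambda(\cdot):=L^\top\Lambda(\cdot)$. Let $\sigma$ be a permutation of $\{1,\dots,m\}$ with $L_{i,\sigma(i)}\ne0$ for all $i$ and $P$ its permutation matrix, $Pe_i=e_{\sigma(i)}$. Assume that for every $j\in\{1,\dots,n\}$, $\operatorname{span}(\Lambda_{\cdot,j}(\Gamma))=\mathbb R^m_{S_{\cdot,j}}$. Then $S\subset P^\top\hat S$ (as sets of nonzero entries). If moreover $\|\hat S\|_0\le\|S\|_0$, then $S=P^\top\hat S$ and $L=CP^\top$ for some $S$-consistent matrix $C$.
   Context: Sparsity pattern: for $\Lambda:\Gamma\to\mathbb R^{m\times n}$, the binary matrix $S$ with $S_{i,j}=1$ iff there exists $\gamma\in\Gamma$ with $\Lambda_{i,j}(\gamma)\neq0$. $\Lambda_{\cdot,j}$ denotes the $j$-th column. For a binary vector $b\in\{0,1\}^m$, $\mathbb R^m_b=\{x\in\mathbb R^m: b_i=0\Rightarrow x_i=0\}$; $S_{\cdot,j}$ is the $j$-th column of $S$. $\|\cdot\|_0$ counts nonzero entries. $S$-consistency: for $S\in\{0,1\}^{m\times n}$, $C\in\mathbb R^{m\times m}$ is $S$-consistent iff for all $i,j$: $[\mathbb 1-S(\mathbb 1-S)^\top]^+_{i,j}=0\Rightarrow C_{i,j}=0$, with $[\cdot]^+=\max\{0,\cdot\}$ entrywise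 and $\mathbb 1$ an all-ones matrix of appropriate size. *)

(* Defs.v *)
From HB Require Import structures.
From mathcomp Require Import all_boot all_order all_fingroup all_algebra.
From mathcomp Require Import boolp reals.
Set Implicit Arguments. Unset Strict Implicit. Unset Printing Implicit Defensive.
Import Order.TTheory GRing.Theory Num.Theory.
Local Open Scope ring_scope.

Section Defs.
Variable R : realType.

Definition sparsity (Gamma : Type) (m n : nat) (Lam : Gamma -> 'M[R]_(m, n))
  : 'M[R]_(m, n) :=
  \matrix_(i, j) (asbool (exists g : Gamma, Lam g i j != 0))%:R.

Definition in_span (m : nat) (A : 'cV[R]_m -> Prop) (v : 'cV[R]_m) : Prop :=
  exists (k : nat) (c : 'I_k -> R) (w : 'I_k -> 'cV[R]_m),
    (forall l, A (w l)) /\ v = \sum_(l < k) c l *: w l.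

Definition Rsub (m : nat) (b : 'cV[R]_m) (x : 'cV[R]_m) : Prop :=
  forall i, b i 0 = 0 -> x i 0 = 0.

Definition norm0 (m n : nat) (A : 'M[R]_(m, n)) : nat :=
  #|[set ij : 'I_m * 'I_n | A ij.1 ij.2 != 0]|.

(* Permutation matrix P with P e_i = e_{sigma i}, i.e. P_{k,i} = [k = sigma i]. *)
Definition pmx (m : nat) (s : 'S_m) : 'M[R]_m :=
  \matrix_(k, i) (k == s i)%:R.

Definition S_consistent (m n : nat) (S : 'M[R]_(m, n)) (C : 'M[R]_m) : Prop :=
  forall i j,
    Num.max 0 ((const_mx 1 - S *m (const_mx 1 - S)^T) i j) = 0 -> C i j = 0.

End Defs.

(* Main.v *)
Require Import Defs.
From HB Require Import structures.
From mathcomp Require Import all_boot all_order all_fingroup all_algebra.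
From mathcomp Require Import boolp reals.
Import Order.TTheory GRing.Theory Num.Theory.
Local Open Scope ring_scope.

Section Aux.
Variable R : realType.

Lemma sparsityP (Gamma : Type) m n (Lam : Gamma -> 'M[R]_(m, n)) i j :
  sparsity Lam i j != 0 <-> exists g, Lam g i j != 0.
Proof.
rewrite mxE; case: (asboolP (exists g : Gamma, Lam g i j != 0)) => h /=.
  by split => // _; rewrite oner_eq0.
by rewrite eqxx; split.
Qed.

Lemma sparsity01 (Gamma : Type) m n (Lam : Gamma -> 'M[R]_(m, n)) i j :
  sparsity Lam i j != 0 -> sparsity Lam i j = 1.
Proof. by rewrite mxE; case: asboolP => //=; rewrite eqxx. Qed.

Lemma sparsity_eq (Gamma1 Gamma2 : Type) m n m' n'
  (L1 : Gamma1 -> 'M[R]_(m, n)) (L2 : Gamma2 -> 'M[R]_(m', n')) i j i' j' :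
  (sparsity L1 i j != 0 <-> sparsity L2 i' j' != 0) ->
  sparsity L1 i j = sparsity L2 i' j'.
Proof.
rewrite !mxE; case: asboolP => _; case: asboolP => _ //=; rewrite ?eqxx ?oner_eq0.
  by case=> /(_ isT).
by case=> _ /(_ isT).
Qed.

Lemma permT_mul m (s : 'S_m) n (A : 'M[R]_(m, n)) i j :
  ((pmx R s)^T *m A) i j = A (s i) j.
Proof.
rewrite !mxE (bigD1 (s i)) //= big1 => [|k /negbTE hk].
  by rewrite !mxE eqxx mul1r addr0.
by rewrite !mxE hk mul0r.
Qed.

Lemma mul_pmx m (s : 'S_m) (L : 'M[R]_m) i j :
  (L *m pmx R s) i j = L i (s j).
Proof.
rewrite !mxE (bigD1 (s j)) //= big1 => [|k /negbTE hk].
  by rewrite !mxE eqxx mulr1 addr0.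
by rewrite !mxE hk mulr0.
Qed.

Lemma pmx_tr m (s : 'S_m) : pmx R s *m (pmx R s)^T = 1%:M.
Proof.
have -> : pmx R s = (perm_mx s)^T by apply/matrixP => a b; rewrite !mxE eq_sym.
by rewrite trmxK tr_perm_mx -perm_mxM mulVg perm_mx1.
Qed.

Lemma cons_entry m n (S : 'M[R]_(m, n)) i j :
  (const_mx 1 - S *m (const_mx 1 - S)^T) i j = 1 - \sum_k S i k * (1 - S j k).
Proof.
rewrite !mxE; congr (_ - _); apply: eq_bigr => k _; by rewrite !mxE.
Qed.

End Aux.

Theorem mainTheorem4 (R : realType) (Gamma : Type) (m n : nat)
  (Lam : Gamma -> 'M[R]_(m, n)) (L : 'M[R]_m) (sigma : 'S_m) :
  L \in unitmx ->
  (forall i, L i (sigma i) != 0) ->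
  (forall j : 'I_n, forall v : 'cV[R]_m,
     in_span (fun w => exists g : Gamma, w = col j (Lam g)) v <->
     Rsub (col j (sparsity Lam)) v) ->
  let S := sparsity Lam in
  let Shat := sparsity (fun g => L^T *m Lam g) in
  let P := pmx R sigma in
  (forall i j, S i j != 0 -> (P^T *m Shat) i j != 0) /\
  ((norm0 Shat <= norm0 S)%N ->
     S = P^T *m Shat /\ exists C : 'M[R]_m, S_consistent S C /\ L = C *m P^T).
Proof.
move=> _ Ldiag Hspan S Shat P.
have orth : forall (k : 'I_m) (j : 'I_n) (i : 'I_m),
    Shat k j = 0 -> S i j != 0 -> L i k = 0.
  move=> k j i hk hij.
  have H0 : forall g, (L^T *m Lam g) k j = 0.
    move=> g; apply/eqP; apply: contraT => hg.
    have : Shat k j != 0 by apply/sparsityP; exists g.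
    by rewrite hk eqxx.
  have [kk [c [w [Hw Hd]]]] : in_span (fun w => exists g : Gamma, w = col j (Lam g))
      (delta_mx i 0).
    apply/Hspan => t ht; rewrite mxE; case: eqVneq => [et|] //=.
    move: ht; rewrite et mxE => ht.
    by move: hij; rewrite /S ht eqxx.
  have -> : L i k = (L^T *m \sum_(l < kk) c l *: w l) k 0.
    by rewrite -Hd -colE !mxE.
  rewrite mulmx_sumr summxE big1 // => l _.
  have [g ->] := Hw l.
  by rewrite -scalemxAr mxE colE mulmxA -colE mxE H0 mulr0.
have part1 : forall i j, S i j != 0 -> (P^T *m Shat) i j != 0.
  move=> i j hij; rewrite permT_mul; apply/negP => /eqP h.
  by move: (Ldiag i); rewrite (orth _ _ _ h hij) eqxx.
split => // hle.
pose f := fun ij : 'I_m * 'I_n => (sigma ij.1, ij.2).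
have finj : injective f.
  by move=> [a b] [c d] [/perm_inj -> ->].
pose A := [set ij : 'I_m * 'I_n | S ij.1 ij.2 != 0].
pose B := [set ij : 'I_m * 'I_n | Shat ij.1 ij.2 != 0].
have sub : f @: A \subset B.
  apply/subsetP => _ /imsetP [ij hij ->]; rewrite inE /=.
  by rewrite inE in hij; have := part1 ij.1 ij.2 hij; rewrite permT_mul.
have card : #|f @: A| = #|B|.
  apply/eqP; rewrite eqn_leq subset_leq_card // (card_imset _ finj); exact: hle.
have eqAB := subset_cardP card sub.
have Heq : forall i j, S i j != 0 <-> Shat (sigma i) j != 0.
  move=> i j; split; first by move=> /part1; rewrite permT_mul.
  move=> h; have : (sigma i, j) \in B by rewrite inE.
  rewrite -eqAB => /imsetP [[i' j'] hA [/perm_inj e1 e2]].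
  by subst; rewrite inE in hA.
have SE : S = P^T *m Shat.
  apply/matrixP => i j; rewrite permT_mul; apply: sparsity_eq; exact: Heq.
split => //; exists (L *m P); split; last by rewrite -mulmxA pmx_tr mulmx1.
move=> i j hmax; rewrite mul_pmx.
case: (pselect (exists k, S i k != 0 /\ S j k = 0)) => [[k [h1 h2]]|hn].
  apply: (orth _ k) h1.
  by rewrite -permT_mul -SE.
exfalso; move: hmax.
have -> : (const_mx 1 - S *m (const_mx 1 - S)^T) i j = 1.
  rewrite cons_entry big1 ?subr0 // => k _.
  have [->|hik] := eqVneq (S i k) 0; first by rewrite mul0r.
  have hjk : S j k != 0 by apply/eqP => hjk; apply: hn; exists k.
  by rewrite (@sparsity01 _ _ _ _ _ _ _ hjk) subrr mulr0.
by rewrite /Num.max ltr01 => /eqP; rewrite oner_eq0.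
Qed.
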